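(* Let $G$ be a locally compact group acting on a topological space $X$. Let $(g_\alpha)$ be a net in $G$ converging to infinity, and assume that for some $x,y\in X$ the net $(g_\alpha x)$ converges to $y$. Then there exist a directed set $(\beta)$ and two nets $n,n':(\beta)\to G$ such that $n(\beta)x\to y$ and $n'(\beta)x\to y$ in $X$, and $n(\beta)^{-1}n'(\beta)\to\infty$ in $G$.
   Context: A net $(g_\alpha)$ in a locally compact space converges to infinity if for every compact $K$ there is $\alpha_0$ with $g_\alpha\notin K$ for all $\alpha\ge\alpha_0$. *)

(* Defs.v *)
From Stdlib Require Import List.

Record topology (T : Type) : Type := Topology {
  is_open : (T -> Prop) -> Prop;
  open_full : is_open (fun _ => True);
  open_inter : forall U V, is_open U -> is_open V ->
                 is_open (fun x => U x /\ V x);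
  open_union : forall (I : Type) (F : I -> T -> Prop),
                 (forall i, is_open (F i)) -> is_open (fun x => exists i, F i x)
}.
Arguments is_open {T} _ _.

Definition compact {T : Type} (tau : topology T) (K : T -> Prop) : Prop :=
  forall (I : Type) (F : I -> T -> Prop),
    (forall i, is_open tau (F i)) ->
    (forall x, K x -> exists i, F i x) ->
    exists l : list I, forall x, K x -> exists i, In i l /\ F i x.

Definition hausdorff {T : Type} (tau : topology T) : Prop :=
  forall x y, x <> y -> exists U V, is_open tau U /\ is_open tau V /\
    U x /\ V y /\ forall z, ~ (U z /\ V z).

Definition locally_compact {T : Type} (tau : topology T) : Prop :=
  forall x, exists U K, is_open tau U /\ U x /\ compact tau K /\
    forall z, U z -> K z.

(* Continuity of a map, and joint continuity of a two-variable map
   (w.r.t. the product topology, phrased via basic open rectangles). *)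
Definition continuous {A B : Type} (tA : topology A) (tB : topology B)
  (f : A -> B) : Prop :=
  forall V, is_open tB V -> is_open tA (fun a => V (f a)).

Definition continuous2 {A B C : Type} (tA : topology A) (tB : topology B)
  (tC : topology C) (f : A -> B -> C) : Prop :=
  forall W, is_open tC W -> forall a b, W (f a b) ->
    exists U V, is_open tA U /\ is_open tB V /\ U a /\ V b /\
      forall a' b', U a' -> V b' -> W (f a' b').

Definition directed {D : Type} (le : D -> D -> Prop) : Prop :=
  inhabited D /\
  (forall a, le a a) /\
  (forall a b c, le a b -> le b c -> le a c) /\
  (forall a b, exists c, le a c /\ le b c).

Definition net_converges {D T : Type} (le : D -> D -> Prop) (tau : topology T)
  (u : D -> T) (y : T) : Prop :=
  forall U, is_open tau U -> U y -> exists a0, forall a, le a0 a -> U (u a).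

Definition net_to_infinity {D T : Type} (le : D -> D -> Prop) (tau : topology T)
  (u : D -> T) : Prop :=
  forall K, compact tau K -> exists a0, forall a, le a0 a -> ~ K (u a).

Record group_struct (G : Type) : Type := GroupStruct {
  gmul : G -> G -> G;
  ginv : G -> G;
  gone : G;
  gmulA : forall a b c, gmul a (gmul b c) = gmul (gmul a b) c;
  gmul1l : forall a, gmul gone a = a;
  gmulVl : forall a, gmul (ginv a) a = gone
}.
Arguments gmul {G} _ _ _.
Arguments ginv {G} _ _.
Arguments gone {G} _.

Definition locally_compact_group {G : Type} (grp : group_struct G)
  (tau : topology G) : Prop :=
  continuous2 tau tau tau (gmul grp) /\ continuous tau tau (ginv grp) /\
  hausdorff tau /\ locally_compact tau.

Definition continuous_action {G X : Type} (grp : group_struct G)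
  (tau : topology G) (sigma : topology X) (act : G -> X -> X) : Prop :=
  (forall x, act (gone grp) x = x) /\
  (forall g h x, act (gmul grp g h) x = act g (act h x)) /\
  continuous2 tau sigma sigma act.

(* Main.v *)
Require Import Defs.
From Stdlib Require Import List FunctionalExtensionality PropExtensionality.

Lemma open_local {T : Type} (tau : topology T) (P : T -> Prop) :
  (forall z, P z -> exists V, is_open tau V /\ V z /\ forall w, V w -> P w) ->
  is_open tau P.
Proof.
  intros H.
  set (I := {V : T -> Prop | is_open tau V /\ forall w, V w -> P w}).
  assert (Ho : is_open tau (fun z => exists i : I, proj1_sig i z)).
  { apply (open_union _ tau I (fun i z => proj1_sig i z)). intro i. exact (proj1 (proj2_sig i)). }
  replace P with (fun z => exists i : I, proj1_sig i z); [exact Ho|].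
  apply functional_extensionality; intro z; apply propositional_extensionality; split.
  - intros [[V [HV HVP]] Hz]. simpl in Hz. auto.
  - intros Pz. destruct (H z Pz) as [V [HV [Vz HVP]]].
    exists (exist _ V (conj HV HVP)). exact Vz.
Qed.

Lemma compact_union {T : Type} (tau : topology T) K1 K2 :
  compact tau K1 -> compact tau K2 -> compact tau (fun z => K1 z \/ K2 z).
Proof.
  intros H1 H2 I F HF Hc.
  destruct (H1 I F HF (fun x h => Hc x (or_introl h))) as [l1 Hl1].
  destruct (H2 I F HF (fun x h => Hc x (or_intror h))) as [l2 Hl2].
  exists (l1 ++ l2). intros x [h|h].
  - destruct (Hl1 x h) as [i [Hi Fi]]. exists i. split; auto. apply in_or_app; auto.
  - destruct (Hl2 x h) as [i [Hi Fi]]. exists i. split; auto. apply in_or_app; auto.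
Qed.

Lemma compact_empty {T : Type} (tau : topology T) : compact tau (fun _ => False).
Proof. intros I F _ _. exists nil. intros x []. Qed.

Lemma compact_translate {G : Type} (grp : group_struct G) (tau : topology G)
  (hm : continuous2 tau tau tau (gmul grp)) (g : G) K :
  compact tau K -> compact tau (fun z => exists k, K k /\ z = gmul grp g k).
Proof.
  intros HK I F HF Hc.
  destruct (HK I (fun i k => F i (gmul grp g k))) as [l Hl].
  - intro i. apply open_local. intros k Fk.
    destruct (hm (F i) (HF i) g k Fk) as [U [V [_ [HV [Ug [Vk HUV]]]]]].
    exists V. split; auto.
  - intros k Kk. apply Hc. exists k; auto.
  - exists l. intros z [k [Kk ->]]. apply Hl; auto.
Qed.

Lemma mulV {G : Type} (grp : group_struct G) a : gmul grp a (ginv grp a) = gone grp.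
Proof.
  rewrite <- (gmul1l _ grp (gmul grp a (ginv grp a))).
  rewrite <- (gmulVl _ grp (ginv grp a)) at 1.
  rewrite <- gmulA. rewrite (gmulA _ grp (ginv grp a) a).
  rewrite gmulVl, gmul1l. apply gmulVl.
Qed.

Section S.
Variables (G X : Type) (grp : group_struct G) (tau : topology G) (A : Type)
  (leA : A -> A -> Prop) (g : A -> G).

Record Bt := MkB {
  bK : G -> Prop; bKc : compact tau bK; bal : A; bga : A; ble : leA bal bga;
  bout : ~ bK (gmul grp (ginv grp (g bal)) (g bga)) }.

Definition leB (b b' : Bt) := (forall z, bK b z -> bK b' z) /\ leA (bal b) (bal b').

Lemma mkB_ex (hm : continuous2 tau tau tau (gmul grp)) (hA : directed leA)
  (hg : net_to_infinity leA tau g) K (hK : compact tau K) a :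
  exists b : Bt, bK b = K /\ bal b = a.
Proof.
  destruct hA as [_ [_ [_ Hd]]].
  destruct (hg _ (compact_translate grp tau hm (g a) K hK)) as [a0 Ha0].
  destruct (Hd a a0) as [c [Hac Ha0c]].
  assert (Hout : ~ K (gmul grp (ginv grp (g a)) (g c))).
  { intro HKc. apply (Ha0 c Ha0c). exists (gmul grp (ginv grp (g a)) (g c)).
    split; auto. rewrite gmulA, mulV, gmul1l. reflexivity. }
  exists (MkB K hK a c Hac Hout). auto.
Qed.
End S.

Theorem lemma2p2 (G X : Type) (grp : group_struct G) (tau : topology G)
  (sigma : topology X) (act : G -> X -> X)
  (hG : locally_compact_group grp tau)
  (hact : continuous_action grp tau sigma act)
  (A : Type) (leA : A -> A -> Prop) (hA : directed leA)
  (g : A -> G) (hg : net_to_infinity leA tau g)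
  (x y : X) (hxy : net_converges leA sigma (fun a => act (g a) x) y) :
  exists (B : Type) (leB : B -> B -> Prop), directed leB /\
    exists n n' : B -> G,
      net_converges leB sigma (fun b => act (n b) x) y /\
      net_converges leB sigma (fun b => act (n' b) x) y /\
      net_to_infinity leB tau (fun b => gmul grp (ginv grp (n b)) (n' b)).
Proof.
  destruct hG as [hm _].
  pose proof hA as hA'.
  destruct hA' as [[a00] [Hrefl [Htr Hd]]].
  exists (Bt G grp tau A leA g), (leB G grp tau A leA g). split; [split; [|split; [|split]]|].
  - destruct (mkB_ex G grp tau A leA g hm hA hg _ (compact_empty tau) a00) as [b _].
    exact (inhabits b).
  - intro b. split; auto.
  - intros a b c [H1 H2] [H3 H4]. split; eauto.
  - intros b1 b2.
    destruct (Hd (bal _ _ _ _ _ _ b1) (bal _ _ _ _ _ _ b2)) as [c [Hc1 Hc2]].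
    destruct (mkB_ex G grp tau A leA g hm hA hg _
      (compact_union tau _ _ (bKc _ _ _ _ _ _ b1) (bKc _ _ _ _ _ _ b2)) c)
      as [b [HbK Hbal]].
    exists b. unfold leB. rewrite HbK, Hbal. split; split; auto.
  - exists (fun b => g (bal _ _ _ _ _ _ b)), (fun b => g (bga _ _ _ _ _ _ b)).
    split; [|split].
    + intros U HU Uy. destruct (hxy U HU Uy) as [a0 Ha0].
      destruct (mkB_ex G grp tau A leA g hm hA hg _ (compact_empty tau) a0) as [b0 [_ Hb0]].
      exists b0. intros b [_ Hle]. rewrite Hb0 in Hle. apply Ha0; auto.
    + intros U HU Uy. destruct (hxy U HU Uy) as [a0 Ha0].
      destruct (mkB_ex G grp tau A leA g hm hA hg _ (compact_empty tau) a0) as [b0 [_ Hb0]].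
      exists b0. intros b [_ Hle]. rewrite Hb0 in Hle. apply Ha0.
      eapply Htr; [exact Hle| apply ble].
    + intros K HK.
      destruct (mkB_ex G grp tau A leA g hm hA hg K HK a00) as [b0 [Hb0 _]].
      exists b0. intros b [HKle _] HKb. apply (bout _ _ _ _ _ _ b).
      apply HKle. rewrite Hb0. exact HKb.
Qed.
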